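(* For all types $A,B,C,D$: (1) if $A\wedge B\equiv C\wedge D$ then $A\equiv C$ and $B\equiv D$; (2) if $A\Rightarrow B\equiv C\Rightarrow D$ then $A\equiv C$ and $B\equiv D$; (3) if $A\wedge B\equiv C\Rightarrow D$ then there exist types $D_1,D_2$ with $D\equiv D_1\wedge D_2$, $A\equiv C\Rightarrow D_1$ and $B\equiv C\Rightarrow D_2$.
   Context: Types: $A ::= \tau \mid A\Rightarrow A \mid A\wedge A$ with $\tau$ a single atomic type. The relation $\equiv$ on types is the smallest relation that is reflexive, symmetric, transitive, contains $A\Rightarrow (B\wedge C)\equiv (A\Rightarrow B)\wedge(A\Rightarrow C)$ for all $A,B,C$, and satisfies: $A\equiv C$ implies $A\Rightarrow B\equiv C\Rightarrow B$ and $A\wedge B\equiv C\wedge B$; $B\equiv C$ implies $A\Rightarrow B\equiv A\Rightarrow C$ and $A\wedge B\equiv A\wedge C$. *)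

(* Defs.v *)
Inductive ty : Type :=
| Atom : ty
| Arr : ty -> ty -> ty
| And : ty -> ty -> ty.

Inductive tyeq : ty -> ty -> Prop :=
| tyeq_refl : forall A, tyeq A A
| tyeq_sym : forall A B, tyeq A B -> tyeq B A
| tyeq_trans : forall A B C, tyeq A B -> tyeq B C -> tyeq A C
| tyeq_distr : forall A B C, tyeq (Arr A (And B C)) (And (Arr A B) (Arr A C))
| tyeq_arr_l : forall A B C, tyeq A C -> tyeq (Arr A B) (Arr C B)
| tyeq_and_l : forall A B C, tyeq A C -> tyeq (And A B) (And C B)
| tyeq_arr_r : forall A B C, tyeq B C -> tyeq (Arr A B) (Arr A C)
| tyeq_and_r : forall A B C, tyeq B C -> tyeq (And A B) (And A C).

(* Main.v *)
Require Import Defs.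

Fixpoint dist (a X : ty) : ty :=
  match X with
  | And X1 X2 => And (dist a X1) (dist a X2)
  | _ => Arr a X
  end.

Fixpoint nf (A : ty) : ty :=
  match A with
  | Atom => Atom
  | And A B => And (nf A) (nf B)
  | Arr A B => dist (nf A) (nf B)
  end.

Lemma nf_sound : forall A B, tyeq A B -> nf A = nf B.
Proof. intros A B H; induction H; simpl; congruence. Qed.

Lemma dist_eq : forall a X, tyeq (Arr a X) (dist a X).
Proof.
  intros a X; induction X; simpl; try apply tyeq_refl.
  eapply tyeq_trans; [apply tyeq_distr|].
  eapply tyeq_trans; [apply tyeq_and_l; eassumption|].
  apply tyeq_and_r; assumption.
Qed.

Lemma nf_eq : forall A, tyeq A (nf A).
Proof.
  induction A; simpl.
  - apply tyeq_refl.
  - eapply tyeq_trans; [apply tyeq_arr_l; eassumption|].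
    eapply tyeq_trans; [apply tyeq_arr_r; eassumption|].
    apply dist_eq.
  - eapply tyeq_trans; [apply tyeq_and_l; eassumption|].
    apply tyeq_and_r; assumption.
Qed.

Lemma dist_inj : forall X a c Y, dist a X = dist c Y -> a = c /\ X = Y.
Proof.
  induction X; intros a c Y H; destruct Y; simpl in H; try discriminate;
    try (injection H; intros; subst; auto; fail).
  injection H; intros H2 H1.
  destruct (IHX1 _ _ _ H1); destruct (IHX2 _ _ _ H2); subst; auto.
Qed.

Lemma equiv_nf : forall A B, nf A = nf B -> tyeq A B.
Proof.
  intros A B H. eapply tyeq_trans; [apply nf_eq|]. rewrite H.
  apply tyeq_sym, nf_eq.
Qed.

Theorem lemma4 :
  forall A B C D : ty,
    (tyeq (And A B) (And C D) -> tyeq A C /\ tyeq B D) /\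
    (tyeq (Arr A B) (Arr C D) -> tyeq A C /\ tyeq B D) /\
    (tyeq (And A B) (Arr C D) ->
       exists D1 D2 : ty,
         tyeq D (And D1 D2) /\ tyeq A (Arr C D1) /\ tyeq B (Arr C D2)).
Proof.
  intros A B C D; split; [|split]; intro H; apply nf_sound in H; simpl in H.
  - injection H; intros; split; apply equiv_nf; assumption.
  - destruct (dist_inj _ _ _ _ H); split; apply equiv_nf; assumption.
  - remember (nf D) as nD. destruct nD; simpl in H; try discriminate.
    injection H; intros H2 H1.
    exists nD1, nD2. split; [|split].
    + rewrite HeqnD; apply nf_eq.
    + eapply tyeq_trans; [apply nf_eq|]. rewrite H1.
      eapply tyeq_trans; [apply tyeq_sym, dist_eq|].
      apply tyeq_arr_l, tyeq_sym, nf_eq.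
    + eapply tyeq_trans; [apply nf_eq|]. rewrite H2.
      eapply tyeq_trans; [apply tyeq_sym, dist_eq|].
      apply tyeq_arr_l, tyeq_sym, nf_eq.
Qed.
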